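(* For every $n\in\mathbb{N}$: (1) there exist a modal space $\boldsymbol{X}$, a clean map $\boldsymbol{f}$ on $\boldsymbol{X}$ induced by a finite, static multi-pointed action model that is not Boolean, and a point $\boldsymbol{x}\in\boldsymbol{X}$ whose orbit $\mathcal{O}_{\boldsymbol{f}}(\boldsymbol{x})$ is periodic with period $n$; and (2) the same holds with a clean map induced by a finite, Boolean multi-pointed action model that is not static.
   Context: Setting: atom set $\Phi$, finite agent set $I$, modal language $\mathcal{L}$ ($\varphi::=\top\mid p\mid\neg\varphi\mid\varphi\wedge\varphi\mid\square_i\varphi$), logic $\Lambda$ a normal modal logic extending $K$. For a set $X$ of pointed Kripke models (countable nonempty state sets, standard semantics), the $\boldsymbol{\mathcal{L}}_\Lambda$ modal space is $\boldsymbol{X}=\{\boldsymbol{x}:x\in X\}$, $\boldsymbol{x}=\{y\in X:y,x\text{ satisfy the same formulas}\}$. Clean map: induced via product update $x\mapsto x\otimes\Sigma\Gamma$ by a multi-pointed action model $\Sigma\Gamma=(\llbracket\Sigma\rrbracket,\mathsf{R},pre,post,\Gamma)$ (countable action set, relations $\mathsf{R}_i$, preconditions in $\mathcal{L}$, postconditions $\top$ or conjunctions of literals over $\Phi$, designated set $\emptyset\ne\Gamma\subseteq\llbracket\Sigma\rrbracket$) that is precondition finite, exhaustive, deterministic and closing over $X$ (every $x\in X$ satisfies $pre(\sigma)$ for exactly one $\sigma\in\Gamma$, finitely many preconditions up to $\Lambda$-equivalence, and $x\otimes\Sigma\Gamma\in X$). Product update: states $(s,\sigma)$ with $Ms\vDash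 pre(\sigma)$, relations componentwise, $p$ true at $(s,\sigma)$ iff $post(\sigma)\vDash p$, or $s\in\llbracket p\rrbracket$ and $post(\sigma)\nvDash\neg p$; designated state $(s,\sigma)$ for the applicable $\sigma\in\Gamma$. $\boldsymbol{f}(\boldsymbol{x})$ is the class of $x\otimes\Sigma\Gamma$. $\Sigma\Gamma$ is finite if $\llbracket\Sigma\rrbracket$ is finite, Boolean if every precondition is modality-free, static if every postcondition is $\top$. Orbit $\mathcal{O}_{\boldsymbol{f}}(\boldsymbol{x})=\{\boldsymbol{f}^m(\boldsymbol{x}):m\in\mathbb{N}_0\}$ is periodic if $\boldsymbol{f}^{m+k}(\boldsymbol{x})=\boldsymbol{f}^m(\boldsymbol{x})$ for some $m\ge0,k>0$; the least such $k$ is its period. *)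

(* Defs.v *)
From HB Require Import structures.
From Stdlib Require List ProofIrrelevance.
From mathcomp Require Import all_boot.

Section Modal.
Variables (Atom : Type) (Agent : finType).

Inductive form : Type :=
| FTop
| FVar (p : Atom)
| FNeg (f : form)
| FAnd (f g : form)
| FBox (i : Agent) (f : form).

Definition countable_type (T : Type) : Prop := exists f : T -> nat, injective f.

Record kmodel : Type := KModel {
  kst : Type;
  kst_countable : countable_type kst;
  krel : Agent -> kst -> kst -> Prop;
  kval : Atom -> kst -> Prop }.

Record pmodel : Type := PModel { pm_model : kmodel; pm_pt : kst pm_model }.

Fixpoint sat (M : kmodel) (s : kst M) (phi : form) : Prop :=
  match phi with
  | FTop => True
  | FVar p => kval M p s
  | FNeg f => ~ sat M s f
  | FAnd f g => sat M s f /\ sat M s g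
  | FBox i f => forall t, krel M i s t -> sat M t f
  end.

Definition psat (x : pmodel) (phi : form) : Prop := sat (pm_model x) (pm_pt x) phi.

(* x and y satisfy the same formulas, i.e. they have the same class in the
   modal space *)
Definition modal_equiv (x y : pmodel) : Prop := forall phi, psat x phi <-> psat y phi.

Fixpoint modality_free (phi : form) : Prop :=
  match phi with
  | FTop => True
  | FVar _ => True
  | FNeg f => modality_free f
  | FAnd f g => modality_free f /\ modality_free g
  | FBox _ _ => False
  end.

(* Postconditions: a conjunction of literals, given as a list of literals
   (p, true) = p, (p, false) = ~p; the empty list is the postcondition T. *)
Definition postcond := seq (Atom * bool).

Definition post_entails (l : postcond) (p : Atom) (b : bool) : Prop :=
  forall v : Atom -> bool, (forall a c, List.In (a, c) l -> v a = c) -> v p = b.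

Record action_model (Sig : finType) : Type := AModel {
  arel : Agent -> Sig -> Sig -> Prop;
  apre : Sig -> form;
  apost : Sig -> postcond;
  adesig : Sig -> Prop }.
Arguments arel {Sig}. Arguments apre {Sig}. Arguments apost {Sig}.
Arguments adesig {Sig}.

Section ProductUpdate.
Variables (Sig : finType) (A : action_model Sig).

Definition pu_state (M : kmodel) : Type :=
  {p : kst M * Sig | sat M p.1 (apre A p.2)}.

Lemma pu_countable (M : kmodel) : countable_type (pu_state M).
Proof.
case: (kst_countable M) => f finj.
exists (fun u : pu_state M => pickle (f (sval u).1, pickle (sval u).2)).
move=> u v /(pcan_inj pickleK) [] /finj e1 /(pcan_inj pickleK) e2.
case: u e1 e2 => [[a b] hu]; case: v => [[c d] hv] /= e1 e2.
subst c d; congr exist; exact: ProofIrrelevance.proof_irrelevance.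
Qed.

Definition pu_model (M : kmodel) : kmodel :=
  @KModel (pu_state M) (pu_countable M)
    (fun i (u v : pu_state M) =>
       krel M i (sval u).1 (sval v).1 /\ arel A i (sval u).2 (sval v).2)
    (fun p (u : pu_state M) =>
       post_entails (apost A (sval u).2) p true \/
       (kval M p (sval u).1 /\ ~ post_entails (apost A (sval u).2) p false)).

Definition pu_point (x : pmodel) (s : Sig) (h : psat x (apre A s)) : pmodel :=
  @PModel (pu_model (pm_model x))
          (exist (fun p : kst (pm_model x) * Sig => sat (pm_model x) p.1 (apre A p.2))
                 (pm_pt x, s) h).
Arguments pu_point {x s}.

Definition updates (x y : pmodel) : Prop :=
  exists s, adesig A s /\ exists h : psat x (apre A s), y = pu_point h.

Definition exhaustive_deterministic (X : pmodel -> Prop) : Prop :=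
  forall x, X x -> exists! s, adesig A s /\ psat x (apre A s).

(* finitely many preconditions (here even up to syntactic identity, which
   implies finiteness up to Lambda-equivalence for every logic Lambda) *)
Definition precondition_finite : Prop :=
  exists L : seq form, forall s, List.In (apre A s) L.

Definition closing (X : pmodel -> Prop) : Prop :=
  forall x s (h : psat x (apre A s)), X x -> adesig A s -> X (pu_point h).

Definition clean (X : pmodel -> Prop) : Prop :=
  (exists s, adesig A s) /\ precondition_finite /\
  exhaustive_deterministic X /\ closing X.

Definition static : Prop := forall s, apost A s = [::].
Definition boolean : Prop := forall s, modality_free (apre A s).

(* xs m is a representative of f^m(class of x) *)
Definition trajectory (x : pmodel) (xs : nat -> pmodel) : Prop :=
  xs 0 = x /\ forall k, updates (xs k) (xs k.+1).

Definition orbit_period (x : pmodel) (n : nat) : Prop :=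
  exists xs, trajectory x xs /\
    (0 < n /\ exists m, modal_equiv (xs (m + n)) (xs m)) /\
    (forall k m, 0 < k < n -> ~ modal_equiv (xs (m + k)) (xs m)).

End ProductUpdate.
End Modal.

Arguments FTop {Atom Agent}.
Arguments clean {Atom Agent Sig}.
Arguments static {Atom Agent Sig}.
Arguments boolean {Atom Agent Sig}.
Arguments orbit_period {Atom Agent Sig}.
Arguments updates {Atom Agent Sig}.
Arguments trajectory {Atom Agent Sig}.

(* Main.v *)
Require Import Defs.
From HB Require Import structures.
From mathcomp Require Import all_boot zify.
From Stdlib Require Import ClassicalEpsilon.

Lemma post_nil (Atom : Type) a c : ~ post_entails Atom [::] a c.
Proof.
move=> H; have : (fun _ : Atom => ~~ c) a = c by apply: H => ? ? [].
by move=> {H}; case: c.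
Qed.

Lemma post_one (Atom : Type) p b a c : post_entails Atom [:: (p, b)] a c <-> a = p /\ b = c.
Proof.
split.
- move=> H.
  pose v := fun x => if excluded_middle_informative (x = p) then b else ~~ c.
  have Hv : v a = c.
    apply: H => a0 c0 [[<- <-]|[]].
    by rewrite /v; case: excluded_middle_informative.
  have Hva : a = p -> v a = b by move=> e; rewrite /v; case: excluded_middle_informative.
  have Hvn : a <> p -> v a = ~~ c by move=> ne; rewrite /v; case: excluded_middle_informative.
  case: (excluded_middle_informative (a = p)) => [e|ne].
    by split=> //; rewrite -Hv Hva.
  by move: Hv; rewrite Hvn //; clear; case: c.
- case=> -> <- v Hv; exact: Hv (or_introl erefl).
Qed.

Section Gen.
Variables (Atom : Type) (Agent : finType).
Notation kmodel := (kmodel Atom Agent).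
Notation kst := (kst Atom Agent).
Notation krel := (krel Atom Agent).
Notation kval := (kval Atom Agent).
Notation sat := (sat Atom Agent).
Notation form := (form Atom Agent).

Definition bisim (M N : kmodel) (Z : kst M -> kst N -> Prop) : Prop :=
  forall s t, Z s t ->
    (forall a, kval M a s <-> kval N a t) /\
    (forall i s', krel M i s s' -> exists t', krel N i t t' /\ Z s' t') /\
    (forall i t', krel N i t t' -> exists s', krel M i s s' /\ Z s' t').

Lemma bisim_sat M N Z : bisim M N Z -> forall phi s t, Z s t -> (sat M s phi <-> sat N t phi).
Proof.
move=> B; elim=> [|p|f IH|f IHf g IHg|i f IH] s t Zst /=.
- by [].
- by case: (B s t Zst) => [H _]; apply: H.
- by rewrite (IH s t Zst).
- by rewrite (IHf s t Zst) (IHg s t Zst).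
- case: (B s t Zst) => [_ [F Bk]]; split=> H u R.
  + case: (Bk i u R) => s' [R' Z'].
    by apply/(IH s' u Z'); apply: H.
  + case: (F i u R) => t' [R' Z'].
    by apply/(IH u t' Z'); apply: H.
Qed.

Lemma bisim_comp M N K Z1 Z2 : bisim M N Z1 -> bisim N K Z2 ->
  bisim M K (fun s u => exists t, Z1 s t /\ Z2 t u).
Proof.
move=> B1 B2 s u [t [Z1st Z2tu]].
case: (B1 s t Z1st) => [V1 [F1 K1]]; case: (B2 t u Z2tu) => [V2 [F2 K2]].
split; first by move=> a; rewrite V1 V2.
split.
- move=> i s' R; case: (F1 i s' R) => t' [R' Z']; case: (F2 i t' R') => u' [R'' Z''].
  by exists u'; split=> //; exists t'.
- move=> i u' R; case: (K2 i u' R) => t' [R' Z']; case: (K1 i t' R') => s' [R'' Z''].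
  by exists s'; split=> //; exists t'.
Qed.

Section PU.
Variables (Sig : finType) (A : action_model Atom Agent Sig).
Notation pu := (pu_model Atom Agent Sig A).

Definition liftZ M N (Z : kst M -> kst N -> Prop) : kst (pu M) -> kst (pu N) -> Prop :=
  fun u v => Z (sval u).1 (sval v).1 /\ (sval u).2 = (sval v).2.

Lemma bisim_pu M N Z : bisim M N Z -> bisim (pu M) (pu N) (liftZ M N Z).
Proof.
move=> B [[s a] hs] [[t b] ht] [/= Zst eab]; subst b.
case: (B s t Zst) => [V [F K]].
split; first by move=> p /=; rewrite V.
split.
- move=> i [[s' a'] hs'] [/= R Ra].
  case: (F i s' R) => t' [R' Z'].
  have ht' : sat N (t', a').1 (apre Atom Agent Sig A (t', a').2).
    by apply/(bisim_sat _ _ _ B _ _ _ Z').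
  by exists (exist _ (t', a') ht').
- move=> i [[t' a'] ht'] [/= R Ra].
  case: (K i t' R) => s' [R' Z'].
  have hs' : sat M (s', a').1 (apre Atom Agent Sig A (s', a').2).
    by apply/(bisim_sat _ _ _ B _ _ _ Z').
  by exists (exist _ (s', a') hs').
Qed.
End PU.
End Gen.
Lemma belast_take (T : Type) (x : T) s : belast x s = take (size s) (x :: s).
Proof. by elim: s x => [|y s IH] x //=; rewrite IH. Qed.
Section W.
Variable n : nat.
Definition w (j : nat) : seq bool := mkseq (fun t => t == j) n.
Lemma w_rot j : j < n -> belast (last false (w j)) (w j) = w (j.+1 %% n).
Proof.
move=> jn; apply: (@eq_from_nth _ false); first by rewrite size_belast !size_mkseq.
rewrite size_belast size_mkseq => t tn.
rewrite [RHS]nth_mkseq // belast_take size_mkseq nth_take // -nth_last size_mkseq.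
rewrite nth_mkseq; last by lia.
have [jl|je] : j < n.-1 \/ j = n.-1 by lia.
- rewrite modn_small; last by lia.
  case: t tn => [|t] tn /=; first by lia.
  by rewrite nth_mkseq; lia.
- have -> : j.+1 %% n = 0 by rewrite je prednK ?modnn //; lia.
  case: t tn => [|t] tn /=; first by lia.
  by rewrite nth_mkseq; lia.
Qed.
End W.

Section Gen2.
Variables (Atom : Type) (Agent : finType).
Notation kmodel := (kmodel Atom Agent).
Notation kst := (kst Atom Agent).
Notation pmodel := (pmodel Atom Agent).

Lemma bisim_refl (M : kmodel) : bisim Atom Agent M M eq.
Proof.
move=> s t <-; split=> //; split.
- by move=> i s' R; exists s'.
- by move=> i s' R; exists s'.
Qed.

Lemma bisim_equiv (x y : pmodel) (K : kmodel) (k0 : kst K) Z1 Z2 :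
  bisim Atom Agent (pm_model Atom Agent x) K Z1 -> Z1 (pm_pt Atom Agent x) k0 ->
  bisim Atom Agent (pm_model Atom Agent y) K Z2 -> Z2 (pm_pt Atom Agent y) k0 ->
  modal_equiv Atom Agent x y.
Proof.
move=> B1 z1 B2 z2 phi; rewrite /psat.
by rewrite (bisim_sat _ _ _ _ _ B1 phi _ _ z1) (bisim_sat _ _ _ _ _ B2 phi _ _ z2).
Qed.

Lemma pf_fin (Sig : finType) (f : Sig -> form Atom Agent) :
  exists L : seq (form Atom Agent), forall s, List.In (f s) L.
Proof.
exists (map f (enum Sig)) => s; apply: List.in_map.
have : s \in enum Sig by rewrite mem_enum.
elim: (enum Sig) => //= a l IH; rewrite in_cons => /orP [/eqP ->|/IH]; [left|right] => //.
Qed.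

Section Traj.
Variables (Sig : finType) (A : action_model Atom Agent Sig) (P : nat -> pmodel -> Prop) (x : pmodel)
  (H0 : P 0 x) (HS : forall k y, P k y -> exists z, updates A y z /\ P k.+1 z).

Definition tstep k (y : {y | P k y}) : {z | updates A (sval y) z /\ P k.+1 z} :=
  constructive_indefinite_description _ (HS k (sval y) (svalP y)).

Fixpoint tseq k : {y | P k y} :=
  match k return {y | P k y} with
  | 0 => exist _ x H0
  | k'.+1 => exist _ (sval (tstep k' (tseq k'))) (proj2 (svalP (tstep k' (tseq k'))))
  end.

Lemma traj_exists : exists xs, trajectory A x xs /\ forall k, P k (xs k).
Proof.
exists (fun k => sval (tseq k)); split; last by move=> k; exact: svalP (tseq k).
split=> // k; exact: proj1 (svalP (tstep k (tseq k))).
Qed.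
End Traj.

Lemma step_bisim (Sig : finType) (A : action_model Atom Agent Sig) (M N K : kmodel) Z
  (B : bisim Atom Agent M N Z) x0 r (Zr : Z x0 r) s
  (h : sat Atom Agent M x0 (apre Atom Agent Sig A s))
  (h' : sat Atom Agent N r (apre Atom Agent Sig A s))
  R (BR : bisim Atom Agent (pu_model Atom Agent Sig A N) K R) k0
  (Rk : R (exist _ (r, s) h') k0) :
  exists Z', bisim Atom Agent (pu_model Atom Agent Sig A M) K Z' /\ Z' (exist _ (x0, s) h) k0.
Proof.
exists (fun u w => exists v, liftZ Atom Agent Sig A M N Z u v /\ R v w); split.
  by apply: bisim_comp BR; apply: bisim_pu.
by exists (exist _ (r, s) h'); split.
Qed.

Lemma modS n k : k.+1 %% n = (k %% n).+1 %% n.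
Proof. by rewrite -addn1 -modnDml addn1. Qed.

End Gen2.

Section Part2.
Variables (Atom : Type) (Agent : finType) (p0 : Atom) (i0 : Agent) (n : nat) (hn : 0 < n).
Notation form := (form Atom Agent).
Definition lit (x : bool) : form := if x then FVar Atom Agent p0 else FNeg Atom Agent (FVar Atom Agent p0).
Definition dia (f : form) : form := FNeg Atom Agent (FBox Atom Agent i0 (FNeg Atom Agent f)).
Definition fbot : form := FNeg Atom Agent FTop.

Definition st2 := option (seq bool).
Lemma st2_count : countable_type st2.
Proof. by exists pickle; apply: (pcan_inj pickleK). Qed.

Definition P2 (j : nat) (u : seq bool) : Prop := (0 < size u < n) \/ u = w n j.
Definition rel2 j (s t : st2) : Prop :=
  match s, t with
  | None, Some u => P2 j u
  | Some (_ :: u), Some v => u <> [::] /\ v = u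
  | _, _ => False
  end.
Definition val2 (a : Atom) (s : st2) : Prop := a = p0 /\ head false (odflt [::] s).
Definition W2 j : kmodel Atom Agent := KModel Atom Agent st2 st2_count (fun _ => rel2 j) val2.

Definition Sig2 : finType := option ('I_n * bool * bool * bool).
Definition arel2 (a b : Sig2) : Prop :=
  match a, b with
  | None, Some (j, o, g, x) => nat_of_ord j = 0 /\ o = g
  | Some (j, o, g, x), Some (j', o', g', x') => nat_of_ord j' = j.+1 /\ o' = x /\ g' = g
  | _, _ => False
  end.
Definition apre2 (a : Sig2) : form :=
  match a with
  | None => FTop
  | Some (j, o, g, x) => if (nat_of_ord j == n.-1) && (x != g) then fbot else lit x
  end.
Definition apost2 (a : Sig2) : postcond Atom :=
  match a with None => [::] | Some (j, o, g, x) => [:: (p0, o)] end.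
Definition A2 := AModel Atom Agent Sig2 (fun _ => arel2) apre2 apost2 (fun a => a = None).

Fixpoint out (j : nat) (o g : bool) (u : seq bool) : seq bool :=
  match u with
  | [::] => [::]
  | x :: u' => o :: match u' with
                    | [::] => [::]
                    | y :: _ => if (j.+1 < n) && ((j.+1 != n.-1) || (y == g))
                                then out j.+1 x g u' else [::]
                    end
  end.

Lemma sat_lit j u x : sat Atom Agent (W2 j) (Some u) (lit x) <-> head false u = x.
Proof.
rewrite /lit /=; case: x => /=; rewrite /val2 /=.
- by split; [case=> _ ->|move=> ->].
- by case: (head false u); split=> //; [move=> H; case: H|move=> _ []].
Qed.

Lemma out_cons2 j o g x y s : out j o g (x :: y :: s) =
  o :: (if (j.+1 < n) && ((j.+1 != n.-1) || (y == g)) then out j.+1 x g (y :: s) else [::]).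
Proof. by []. Qed.

Lemma out_short u j o g : j + size u < n -> out j o g u = belast o u.
Proof.
elim: u j o => [//|x [|y s] IH] j o h //.
rewrite /= in h; rewrite out_cons2.
have -> : (j.+1 < n) && ((j.+1 != n.-1) || (y == g)) by apply/andP; split; [lia|apply/orP; left; lia].
by rewrite IH //=; lia.
Qed.

Lemma out_full u j o g : u <> [::] -> j + size u = n -> last false u = g -> out j o g u = belast o u.
Proof.
elim: u j o => [//|x [|y s] IH] j o _ h hl //.
rewrite /= in h hl; rewrite out_cons2.
have -> : (j.+1 < n) && ((j.+1 != n.-1) || (y == g)).
  apply/andP; split; first lia.
  case: s IH h hl => [|z s] IH /= h hl; last by apply/orP; left; apply/eqP; lia.
  by rewrite hl eqxx orbT.
by rewrite IH //=; lia.
Qed.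

Lemma out_trunc u j o g : 1 < size u -> j + size u = n -> last false u != g -> size (out j o g u) = (size u).-1.
Proof.
elim: u j o => [//|x [//|y s] IH] j o hs h hl.
rewrite /= in hs h hl; rewrite out_cons2.
case: s IH hs h hl => [|z s] IH /= hs h hl.
  have -> : (j.+1 < n) && ((j.+1 != n.-1) || (y == g)) = false.
    apply/negbTE; rewrite negb_and negb_or negbK; apply/orP; right.
    by rewrite hl andbT; apply/eqP; lia.
  by [].
have -> : (j.+1 < n) && ((j.+1 != n.-1) || (y == g)) by apply/andP; split; [lia|apply/orP; left; lia].
change ((size (out j.+1 x g [:: y, z & s])).+1 = (size [:: x, y, z & s]).-1).
by rewrite IH //=; lia.
Qed.

Notation PU2 j := (pu_model Atom Agent Sig2 A2 (W2 j)).

Definition R2 j (u : kst Atom Agent (PU2 j)) (v : st2) : Prop :=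
  match sval u with
  | (None, None) => v = None
  | (Some su, Some (j0, o, g, x)) => su <> [::] /\ v = Some (out j0 o g su)
  | _ => False
  end.

Lemma pre2_head j su j0 o g x :
  sat Atom Agent (W2 j) (Some su) (apre2 (Some (j0, o, g, x))) ->
  head false su = x /\ ((nat_of_ord j0 == n.-1) ==> (x == g)).
Proof.
rewrite /apre2; case: ifP => [_ /= H|]; first by case: H.
by move=> /negbT; rewrite negb_and negbK => hc /sat_lit ->; split=> //; apply/implyP=> e; move: hc; rewrite e.
Qed.

Lemma R2_bisim j : j < n -> bisim Atom Agent (PU2 j) (W2 (j.+1 %% n)) (R2 j).
Proof.
move=> hj [[s a] h] v; rewrite /R2 /=.
case: s h => [su|] h; case: a h => [[[[j0 o] g] x]|] h //.
- case=> sune ->.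
  have [hx hg] := pre2_head j su j0 o g x h; clear h.
  split.
    move=> a /=; rewrite /val2 /= !post_one.
    case: su sune {hx} => [//|y su] _ /=.
    by case: o; intuition.
  split.
  + move=> _ [[s' a'] h'] /= [R Ra].
    case: s' h' R => [su'|] h' R /=; last by move: R; case: (su).
    case: su sune hx R => [//|x' su] _ /= hx [su'ne esu]; subst su' x'.
    case: a' h' Ra => [[[[j1 o1] g1] x1]|] h' Ra /=; last by case: Ra.
    case: Ra => ej1 [eo1 eg1]; subst o1 g1.
    have [hx1 hg1] := pre2_head j su j1 x g x1 h'.
    exists (Some (out j1 x g su)); split; last by split.
    case: su su'ne hx1 h' => [//|y su] _ /= hx1 h'; subst x1.
    rewrite -/(out j0.+1 x g (y :: su)) /=.
    have -> : (j0.+1 < n) && ((j0.+1 != n.-1) || (y == g)).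
      apply/andP; split; first by rewrite -ej1.
      by rewrite -ej1; case: (nat_of_ord j1 == n.-1) hg1 => //= ->; rewrite orbT.
    by rewrite ej1; split.
  + move=> _ [su2|] /= Rv; last by move: Rv; case: (out _ _ _ _).
    case: su sune hx Rv => [//|x' [|y s]] _ hx Rv; first by case: Rv.
    rewrite /= in hx; subst x'.
    rewrite out_cons2 in Rv.
    have [cond|cond] := boolP ((j0.+1 < n) && ((j0.+1 != n.-1) || (y == g))); last first.
      by move: Rv; rewrite (negbTE cond); case.
    move: Rv; rewrite cond => -[_ esu2].
    have hlt : j0.+1 < n by case/andP: cond.
    have hpre : sat Atom Agent (W2 j) (Some (y :: s), Some (Ordinal hlt, x, g, y)).1
                  (apre Atom Agent Sig2 A2 (Some (y :: s), Some (Ordinal hlt, x, g, y)).2).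
      rewrite /= /apre2 /=.
      have -> : (j0.+1 == n.-1) && (y != g) = false.
        by case/andP: cond => _; case: (j0.+1 == n.-1) => //= ->.
      by apply/sat_lit.
    exists (exist _ (Some (y :: s), Some (Ordinal hlt, x, g, y)) hpre); split=> //=.
    by rewrite esu2.
- move=> ->.
  split.
    move=> a /=; rewrite /val2 /=; split; last by case.
    case=> [H|[[_ F] _]]; [by case: (post_nil _ _ _ H) | by move: F].
  split.
  + move=> _ [[s' a'] h'] /= [R Ra].
    case: s' h' R => [su|] h' R /=; last by case: R.
    case: a' h' Ra => [[[[j1 o1] g1] x1]|] h' Ra /=; last by case: Ra.
    case: Ra => ej1 eo1; subst o1.
    have [hx1 hg1] := pre2_head j su j1 g1 g1 x1 h'.
    have sune : su <> [::].
      case: R => [/andP [s0 _]|->]; first by move: s0; case: (su).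
      by case E : (w n j) => //; move: (size_mkseq (fun t => t == j) n); rewrite -/(w n j) E /=; lia.
    exists (Some (out j1 g1 g1 su)); split; last by split.
    rewrite /= /P2.
    case: R => [/andP [s0 sn]|esu].
      left; rewrite out_short; last by rewrite ej1.
      by rewrite size_belast s0 sn.
    have szs : size su = n by rewrite esu size_mkseq.
    case El : (last false su == g1).
      have e1 : j1 + size su = n by rewrite ej1 szs.
      have e2 : last false su = g1 by apply/eqP.
      right; rewrite (out_full _ _ _ _ sune e1 e2).
      by move/eqP: El => <-; rewrite esu w_rot.
    have n2 : 1 < n.
      rewrite ltnNge; apply/negP => n1.
      have en : n = 1 by lia.
      have : x1 == g1 by move/implyP: hg1; apply; apply/eqP; rewrite ej1 en.
      move: El; rewrite -hx1.
      case: su sune szs {esu h' hx1} => [//|y [|z s]] _ /= szs; last by lia.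
      by move=> ->.
    left; rewrite out_trunc; first by rewrite szs; lia.
      by rewrite szs.
      by rewrite ej1 szs.
    by rewrite El.
  + move=> _ [su2|] /= Rv; last by case: Rv.
    case: Rv => [/andP [s0 sn]|esu2].
    * case: su2 s0 sn => [//|g' v'] _ /= sn.
      have n2 : (0 == n.-1) = false by apply/negbTE/eqP; lia.
      have hpre : sat Atom Agent (W2 j)
          (Some (rcons v' false), Some (Ordinal hn, g', g', head false (rcons v' false))).1
          (apre Atom Agent Sig2 A2
             (Some (rcons v' false), Some (Ordinal hn, g', g', head false (rcons v' false))).2).
        by rewrite /= /apre2 /= n2 /=; apply/sat_lit.
      exists (exist (fun p : st2 * Sig2 => sat Atom Agent (W2 j) p.1 (apre Atom Agent Sig2 A2 p.2)) _ hpre); split; first split.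
      - by rewrite /= /P2 size_rcons; left; apply/andP; split.
      - by [].
      - split; first by case: (v').
        by rewrite out_short ?belast_rcons // size_rcons.
    * subst su2.
      have szw : size (w n j) = n by rewrite size_mkseq.
      have wne : w n j <> [::] by move=> e; move: szw; rewrite e /=; lia.
      have hhl : (0 == n.-1) ==> (head false (w n j) == last false (w n j)).
        apply/implyP => /eqP e; move: szw; case: (w n j) => [|a [|b l]] //=; lia.
      have hpre : sat Atom Agent (W2 j)
          (Some (w n j), Some (Ordinal hn, last false (w n j), last false (w n j), head false (w n j))).1
          (apre Atom Agent Sig2 A2
             (Some (w n j), Some (Ordinal hn, last false (w n j), last false (w n j), head false (w n j))).2).
        rewrite /= /apre2 /=.
        have -> : (0 == n.-1) && (head false (w n j) != last false (w n j)) = false.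
          by move: hhl; case: (0 == n.-1) => //= /eqP ->; rewrite eqxx.
        by apply/sat_lit.
      exists (exist (fun p : st2 * Sig2 => sat Atom Agent (W2 j) p.1 (apre Atom Agent Sig2 A2 p.2)) _ hpre); split; first split.
      - by rewrite /= /P2; right.
      - by [].
      - split=> //=.
        by rewrite out_full ?w_rot // szw.
Qed.


Fixpoint chi (u : seq bool) : form :=
  match u with
  | [::] => FTop
  | x :: u' => match u' with
               | [::] => FAnd Atom Agent (lit x) (FBox Atom Agent i0 fbot)
               | _ => FAnd Atom Agent (lit x) (dia (chi u'))
               end
  end.

Lemma sat_chi j u v : u <> [::] -> v <> [::] ->
  (sat Atom Agent (W2 j) (Some v) (chi u) <-> v = u).
Proof.
elim: u v => [//|x [|z u] IH] [//|y v] _ _.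
- rewrite /=; split.
  + case=> H1 H; move/sat_lit: H1 => /= ->; congr (_ :: _).
    case: v H => [//|y' v] H; exfalso; apply: (H (Some (y' :: v))) => //.
  + case=> -> ->; split; first by apply/sat_lit.
    by move=> [t|] // [H _] _; apply: H.
- have zne : z :: u <> [::] by [].
  have IH' := fun l => IH l zne.
  rewrite [chi _]/= /=; split.
  + case=> H1 H; move/sat_lit: H1 => /= ->; congr (_ :: _).
    case: v H => [|y' v] H.
      by exfalso; apply: H => -[t|] // [H' _]; exfalso; apply: H'.
    case E : (y' :: v == z :: u); first by apply/eqP.
    exfalso; apply: H => -[t|] //= [_ ->] Hs.
    have ne : y' :: v <> [::] by [].
    by move: E; rewrite ((IH' _ ne).1 Hs) eqxx.
  + case=> -> ->; split; first by apply/sat_lit.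
    by move=> H; apply: (H (Some (z :: u))) => //; apply/IH'.
Qed.

Lemma w_inj a b : a < n -> w n a = w n b -> a = b.
Proof.
move=> an e; have := erefl (nth false (w n a) a).
by rewrite {2}e !nth_mkseq // eqxx => /esym/eqP.
Qed.

Lemma w_ne a : w n a <> [::].
Proof. by move=> e; move: (size_mkseq (fun t => t == a) n); rewrite -/(w n a) e /=; lia. Qed.

Lemma sat_root2 j a : a < n -> (sat Atom Agent (W2 j) None (dia (chi (w n a))) <-> a = j).
Proof.
move=> an; rewrite /=; split.
- move=> H; case: (a =P j) => // ne; exfalso; apply: H => -[u|//] /= Pu.
  move/(sat_chi _ _ _ (w_ne a)) => eu.
  have {}eu : u = w n a by apply: eu; case: Pu => [/andP [s0 _]|->]; [case: (u) s0|apply: w_ne].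
  case: Pu => [|e]; first by rewrite eu size_mkseq; lia.
  by apply: ne; apply: (w_inj _ _ an); rewrite -eu e.
- move=> -> H; apply: (H (Some (w n j))); first by right.
  by apply/(sat_chi _ _ _ (w_ne j) (w_ne j)).
Qed.

Lemma part2 : exists (X : pmodel Atom Agent -> Prop) (Sig : finType) (A : action_model Atom Agent Sig),
      clean A X /\ boolean A /\ ~ static A /\ exists x, X x /\ orbit_period A x n.
Proof.
exists (fun _ => True), Sig2, A2.
split.
  split; first by exists None.
  split; first exact: pf_fin.
  split; last by [].
  move=> x _; exists None; split; first by split.
  by move=> s [-> _].
split.
  move=> [[[[j o] g] x]|] //=; rewrite /apre2; case: ifP => _ //; by case: x.
split.
  by move=> H; move: (H (Some (Ordinal hn, true, true, true))) => /= e; discriminate e.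
pose x0 := PModel Atom Agent (W2 0) None.
exists x0; split=> //.
pose inv k (y : pmodel Atom Agent) := exists Z, bisim Atom Agent (pm_model Atom Agent y) (W2 (k %% n)) Z /\ Z (pm_pt Atom Agent y) None.
have H0 : inv 0 x0 by exists eq; rewrite mod0n; split=> //; apply: bisim_refl.
have HS : forall k y, inv k y -> exists z, updates A2 y z /\ inv k.+1 z.
  move=> k y [Z [B Zr]].
  exists (pu_point Atom Agent Sig2 A2 y None I); split.
    by exists None; split=> //; exists I.
  have := @step_bisim Atom Agent Sig2 A2 _ _ _ _ B _ _ Zr None I I _ (R2_bisim _ (ltn_pmod k hn)) None erefl.
  by rewrite -modS.
have [xs [tr inv_xs]] := @traj_exists _ _ _ A2 inv x0 H0 HS.
exists xs; split=> //; split.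
  split=> //; exists 0; rewrite add0n.
  have [Z1 [B1 z1]] := inv_xs n; have [Z2 [B2 z2]] := inv_xs 0.
  rewrite modnn in B1; rewrite mod0n in B2.
  exact: bisim_equiv B1 z1 B2 z2.
move=> k m /andP [k0 kn] E.
have [Z1 [B1 z1]] := inv_xs (m + k); have [Z2 [B2 z2]] := inv_xs m.
have := E (dia (chi (w n (m %% n)))); rewrite /psat.
rewrite (bisim_sat _ _ _ _ _ B1 _ _ _ z1) (bisim_sat _ _ _ _ _ B2 _ _ _ z2) !sat_root2 ?ltn_pmod //.
case=> _ /(_ erefl) e.
have : (m + 0) %% n = (m + k) %% n by rewrite addn0.
move/eqP; rewrite eqn_modDl mod0n modn_small // => /eqP; lia.
Qed.

End Part2.

Section Part1.
Variables (Atom : Type) (Agent : finType) (i0 : Agent) (n : nat) (hn : 0 < n).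
Notation form := (form Atom Agent).
Definition dia1 (f : form) : form := FNeg Atom Agent (FBox Atom Agent i0 (FNeg Atom Agent f)).
Fixpoint diaN (m : nat) (f : form) : form :=
  match m with 0 => f | m'.+1 => dia1 (diaN m' f) end.
Definition psi (j : nat) : form :=
  dia1 (FAnd Atom Agent (diaN j FTop) (FNeg Atom Agent (diaN j.+1 FTop))).

Definition st1 := option (option nat).
Lemma st1_count : countable_type st1.
Proof. by exists pickle; apply: (pcan_inj pickleK). Qed.

Definition rel1 j (s t : st1) : Prop :=
  match s, t with
  | None, Some None => True
  | None, Some (Some m) => m = j
  | Some None, Some None => True
  | Some (Some m), Some (Some m') => m = m'.+1
  | _, _ => False
  end.
Definition D1 j : kmodel Atom Agent := KModel Atom Agent st1 st1_count (fun _ => rel1 j) (fun _ _ => False).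

Definition Sig1 : finType := ('I_n + option 'I_n)%type.
Definition arel1 (a b : Sig1) : Prop :=
  match a, b with
  | inl j, inr None => True
  | inl j, inr (Some m) => nat_of_ord m = j.+1 %% n
  | inr None, inr None => True
  | inr (Some m), inr (Some m') => nat_of_ord m = m'.+1
  | _, _ => False
  end.
Definition apre1 (a : Sig1) : form :=
  match a with inl j => psi j | inr _ => diaN n FTop end.
Definition A1 := AModel Atom Agent Sig1 (fun _ => arel1) apre1 (fun _ => [::]) (fun a => exists j, a = inl j).

Lemma sat_loop j m : sat Atom Agent (D1 j) (Some None) (diaN m FTop).
Proof. by elim: m => //= m IH H; apply: (H (Some None)). Qed.

Lemma sat_chain j c m : sat Atom Agent (D1 j) (Some (Some c)) (diaN m FTop) <-> m <= c.
Proof.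
elim: m c => [|m IH] c //=.
case: c => [|c] /=.
  by split=> // H; exfalso; apply: H => -[[t|]|] //.
rewrite ltnS; split.
  move=> H; case: (boolP (m <= c)) => // nle; exfalso.
  apply: H => -[[t|]|] //= e Hs; case: e => et; subst t.
  by move/IH: Hs; rewrite (negbTE nle).
by move=> le H; apply: (H (Some (Some c))) => //; apply/IH.
Qed.

Lemma sat_dia M s f : sat Atom Agent M s (dia1 f) <->
  ~ (forall t, krel Atom Agent M i0 s t -> ~ sat Atom Agent M t f).
Proof. by []. Qed.

Lemma sat_psi j a : j < n -> (sat Atom Agent (D1 j) None (psi a) <-> a = j).
Proof.
move=> hj; rewrite /psi sat_dia; split.
- move=> H; case: (a =P j) => // ne; exfalso; apply: H => -[[t|]|] // Rt [H1 H2].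
  + rewrite /= in Rt; subst t; move/sat_chain: H1 => H1; apply: H2; apply/(sat_chain j j a.+1); lia.
  + by apply: H2; exact: (sat_loop j a.+1).
- move=> -> H; apply: (H (Some (Some j))) => //; split; first by apply/(sat_chain j j j).
  by move/(sat_chain j j j.+1); lia.
Qed.

Notation PU1 j := (pu_model Atom Agent Sig1 A1 (D1 j)).

Definition R1 j (u : kst Atom Agent (PU1 j)) (v : st1) : Prop :=
  match sval u with
  | (None, inl _) => v = None
  | (Some None, inr None) => v = Some None
  | (Some None, inr (Some m)) => v = Some (Some (nat_of_ord m))
  | _ => False
  end.

Lemma R1_bisim j : j < n -> bisim Atom Agent (PU1 j) (D1 (j.+1 %% n)) (R1 j).
Proof.
move=> hj [[s a] h] v Hr.
split.
  move=> b /=; split=> // -[H|[[]]]; exact: post_nil _ _ _ H.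
move: Hr; rewrite /R1 /=.
case: s h => [[c|]|] h; case: a h => [a0|[m|]] h //=.
-
  move=> ->; split.
  + move=> _ [[s' b] h'] /= [R Rb].
    case: s' h' R => [[c'|]|] h' R; try by case: R.
    case: b h' Rb => [b0|[m'|]] h' Rb; try by case: Rb.
    by exists (Some (Some (nat_of_ord m'))); split=> //=; rewrite -Rb.
  + move=> _ [[c|]|] Rv; try by case: Rv.
    have hlt : c < n by move: (ltn_ord m); rewrite /= in Rv; lia.
    have hpre : sat Atom Agent (D1 j) ((Some None, inr (Some (Ordinal hlt))) : st1 * Sig1).1
                  (apre Atom Agent Sig1 A1 ((Some None, inr (Some (Ordinal hlt))) : st1 * Sig1).2).
      exact: (sat_loop j n).
    by exists (exist (fun p : st1 * Sig1 => sat Atom Agent (D1 j) p.1 (apre Atom Agent Sig1 A1 p.2)) _ hpre).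
-
  move=> ->; split.
  + move=> _ [[s' b] h'] /= [R Rb].
    case: s' h' R => [[c'|]|] h' R; try by case: R.
    case: b h' Rb => [b0|[m'|]] h' Rb; try by case: Rb.
    by exists (Some None).
  + move=> _ [[c|]|] Rv; try by case: Rv.
    have hpre : sat Atom Agent (D1 j) ((Some None, inr None) : st1 * Sig1).1
                  (apre Atom Agent Sig1 A1 ((Some None, inr None) : st1 * Sig1).2).
      exact: (sat_loop j n).
    by exists (exist (fun p : st1 * Sig1 => sat Atom Agent (D1 j) p.1 (apre Atom Agent Sig1 A1 p.2)) _ hpre).
-
  move=> ->.
  have ea : nat_of_ord a0 = j by apply/(sat_psi _ _ hj).
  split.
  + move=> _ [[s' b] h'] /= [R Rb].
    case: b h' Rb => [b0|[m'|]] h' Rb; try by case: Rb.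
    - case: s' h' R => [[c'|]|] h' R; last by case: R.
      + by exfalso; rewrite /= in R; subst c'; have := (sat_chain j j n).1 h'; lia.
      by exists (Some (Some (nat_of_ord m'))); split=> //=; rewrite Rb ea.
    - case: s' h' R => [[c'|]|] h' R; last by case: R.
      + by exfalso; rewrite /= in R; subst c'; have := (sat_chain j j n).1 h'; lia.
      by exists (Some None).
  + move=> _ [[c|]|] Rv; try by case: Rv.
    * have hlt : c < n by rewrite /= in Rv; rewrite Rv ltn_pmod.
      have hpre : sat Atom Agent (D1 j) ((Some None, inr (Some (Ordinal hlt))) : st1 * Sig1).1
                    (apre Atom Agent Sig1 A1 ((Some None, inr (Some (Ordinal hlt))) : st1 * Sig1).2).
        exact: (sat_loop j n).
      exists (exist (fun p : st1 * Sig1 => sat Atom Agent (D1 j) p.1 (apre Atom Agent Sig1 A1 p.2)) _ hpre); split=> //=.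
      by rewrite ea.
    * have hpre : sat Atom Agent (D1 j) ((Some None, inr None) : st1 * Sig1).1
                    (apre Atom Agent Sig1 A1 ((Some None, inr None) : st1 * Sig1).2).
        exact: (sat_loop j n).
      by exists (exist (fun p : st1 * Sig1 => sat Atom Agent (D1 j) p.1 (apre Atom Agent Sig1 A1 p.2)) _ hpre).
Qed.

Definition inv1 k (y : pmodel Atom Agent) := exists Z,
  bisim Atom Agent (pm_model Atom Agent y) (D1 (k %% n)) Z /\ Z (pm_pt Atom Agent y) None.

Lemma inv1_pre k y a : inv1 k y -> (psat Atom Agent y (psi a) <-> a = k %% n).
Proof.
case=> Z [B Zr]; rewrite /psat (bisim_sat _ _ _ _ _ B _ _ _ Zr).
by apply: sat_psi; apply: ltn_pmod.
Qed.

Lemma step1 k y a (h : psat Atom Agent y (apre Atom Agent Sig1 A1 a)) :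
  inv1 k y -> (exists j, a = inl j) -> inv1 k.+1 (pu_point Atom Agent Sig1 A1 y a h).
Proof.
move=> [Z [B Zr]] [a0 ea]; subst a.
have h' : sat Atom Agent (D1 (k %% n)) None (apre Atom Agent Sig1 A1 (inl a0)).
  by apply/(bisim_sat _ _ _ _ _ B _ _ _ Zr).
have := @step_bisim Atom Agent Sig1 A1 _ _ _ _ B _ _ Zr (inl a0) h h' _ (R1_bisim _ (ltn_pmod k hn)) None erefl.
by rewrite -modS.
Qed.

Lemma part1 : exists (X : pmodel Atom Agent -> Prop) (Sig : finType) (A : action_model Atom Agent Sig),
      clean A X /\ static A /\ ~ boolean A /\ exists x, X x /\ orbit_period A x n.
Proof.
exists (fun y => exists k, inv1 k y), Sig1, A1.
split.
  split; first by exists (inl (Ordinal hn)); exists (Ordinal hn).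
  split; first exact: pf_fin.
  split.
    move=> y [k Hk]; exists (inl (Ordinal (ltn_pmod k hn))); split.
      split; first by eexists.
      exact: ((inv1_pre k y _ Hk).2 erefl).
    move=> s [[a ->] hs]; congr inl; apply: val_inj => /=.
    exact: (esym ((inv1_pre k y _ Hk).1 hs)).
  by move=> y s h [k Hk] ds; exists k.+1; apply: step1.
split; first by [].
split.
  by move=> H; move: (H (inr None)) => /=; clear H; case: (n) hn => [|m] //= _ [].
pose x0 := PModel Atom Agent (D1 0) None.
have H0 : inv1 0 x0 by exists eq; rewrite mod0n; split=> //; apply: bisim_refl.
exists x0; split; first by exists 0.
have HS : forall k y, inv1 k y -> exists z, updates A1 y z /\ inv1 k.+1 z.
  move=> k y Hk.
  have h : psat Atom Agent y (apre Atom Agent Sig1 A1 (inl (Ordinal (ltn_pmod k hn)))).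
    exact: ((inv1_pre k y _ Hk).2 erefl).
  exists (pu_point Atom Agent Sig1 A1 y _ h); split.
    by exists (inl (Ordinal (ltn_pmod k hn))); split; [eexists|exists h].
  by apply: step1 => //; eexists.
have [xs [tr inv_xs]] := @traj_exists _ _ _ A1 inv1 x0 H0 HS.
exists xs; split=> //; split.
  split=> //; exists 0; rewrite add0n.
  have [Z1 [B1 z1]] := inv_xs n; have [Z2 [B2 z2]] := inv_xs 0.
  rewrite modnn in B1; rewrite mod0n in B2.
  exact: bisim_equiv B1 z1 B2 z2.
move=> k m /andP [k0 kn] E.
have := E (psi (m %% n)); rewrite (inv1_pre _ _ _ (inv_xs (m + k))) (inv1_pre _ _ _ (inv_xs m)).
case=> _ /(_ erefl) e.
have : (m + 0) %% n = (m + k) %% n by rewrite addn0.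
move/eqP; rewrite eqn_modDl mod0n modn_small // => /eqP; lia.
Qed.

End Part1.

Theorem proposition12 (Atom : Type) (Agent : finType)
  (atom_nonempty : inhabited Atom) (agent_nonempty : inhabited Agent)
  (n : nat) (hn : 0 < n) :
  (exists (X : pmodel Atom Agent -> Prop) (Sig : finType)
          (A : action_model Atom Agent Sig),
      clean A X /\ static A /\ ~ boolean A /\
      exists x, X x /\ orbit_period A x n)
  /\
  (exists (X : pmodel Atom Agent -> Prop) (Sig : finType)
          (A : action_model Atom Agent Sig),
      clean A X /\ boolean A /\ ~ static A /\
      exists x, X x /\ orbit_period A x n).
Proof.
case: atom_nonempty => p0; case: agent_nonempty => i0.
split; [exact: (part1 Atom Agent i0 n hn) | exact: (part2 Atom Agent p0 i0 n hn)].
Qed.
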